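(* There exists an invertible $18\times18$ binary matrix such that the corresponding linear kernel has partial distance sequence $(1,2,2,2,2,2,4,4,4,4,6,6,8,8,8,8,8,16)$. Consequently $E_{18}\ge\frac1{18}\sum_{i=0}^{17}\log_{18}D_{min}^{(i)}\approx0.49521$.
   Context: A kernel of dimension $\ell$ is a bijection $g:\{0,1\}^\ell\to\{0,1\}^\ell$; a linear kernel is $g({\bf u})={\bf u}G$ over $\mathbb{F}_2$ for an invertible $\ell\times\ell$ binary matrix $G$. ${\bf a}\bullet{\bf b}$ denotes concatenation, $d_H$ Hamming distance. Partial distances: $D_{min}^{(i)}=\min\{d_H(g({\bf w}\bullet 0\bullet{\bf u}),g({\bf w}\bullet 1\bullet {\bf v})) : {\bf w}\in\{0,1\}^i,\ {\bf u},{\bf v}\in\{0,1\}^{\ell-i-1}\}$, $i=0,\dots,\ell-1$; exponent $E(g)=\frac1\ell\sum_{i}\log_\ell D_{min}^{(i)}$; $E_\ell=\max_g E(g)$ over all kernels of dimension $\ell$. *)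

(* Defs.v *)
From HB Require Import structures.
From mathcomp Require Import all_boot all_order all_algebra.
From Stdlib Require Import Reals.
Set Implicit Arguments. Unset Strict Implicit. Unset Printing Implicit Defensive.
Import GRing.Theory.

Notation bvec l := 'rV['F_2]_l.

Definition dH (l : nat) (a b : bvec l) : nat :=
  #|[set j : 'I_l | a ord0 j != b ord0 j]|.

Definition is_kernel (l : nat) (g : bvec l -> bvec l) : Prop := bijective g.

Definition lin_kernel (l : nat) (G : 'M['F_2]_l) : bvec l -> bvec l :=
  fun u => mulmx u G.

(* pairs (x, y) = (w • 0 • u, w • 1 • v) with w of length i *)
Definition split_pair (l : nat) (i : 'I_l) (p : bvec l * bvec l) : bool :=
  [forall j : 'I_l, (j < i)%N ==> (p.1 ord0 j == p.2 ord0 j)]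
  && (p.1 ord0 i == GRing.zero) && (p.2 ord0 i == GRing.one _).

(* partial distance D_min^(i); the pair set is nonempty and all distances are
   <= l, so l is a neutral starting value for the minimum *)
Definition Dmin (l : nat) (g : bvec l -> bvec l) (i : 'I_l) : nat :=
  \big[minn/l]_(p : bvec l * bvec l | split_pair i p) dH (g p.1) (g p.2).

Definition logb (b x : R) : R := (ln x / ln b)%R.

Definition exponent (l : nat) (g : bvec l -> bvec l) : R :=
  (/ INR l * \big[Rplus/0%R]_(i < l) logb (INR l) (INR (Dmin g i)))%R.

Definition dseq18 : seq nat :=
  [:: 1; 2; 2; 2; 2; 2; 4; 4; 4; 4; 6; 6; 8; 8; 8; 8; 8; 16]%N.

(* Main.v *)
Require Import Defs.
From HB Require Import structures.
From mathcomp Require Import all_boot all_order all_algebra.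
From Stdlib Require Import Reals Lra.
Set Implicit Arguments. Unset Strict Implicit. Unset Printing Implicit Defensive.
Import GRing.Theory.

Definition rowsG : seq (seq bool) :=
 [:: [:: true; true; true; true; true; false; false; false; true; false; false; true; true; false; false; true; false; false];
  [:: true; false; true; true; false; false; false; true; false; true; false; true; false; true; false; false; false; true];
  [:: true; true; false; false; true; false; true; true; true; false; true; true; true; true; false; true; false; true];
  [:: true; true; true; true; true; false; true; false; false; false; true; false; true; true; false; true; false; false];
  [:: true; false; false; true; true; true; false; false; true; false; false; false; false; true; true; false; true; false];
  [:: true; true; false; true; false; false; true; false; false; false; false; true; true; true; false; true; false; false];
  [:: true; true; true; true; true; false; false; true; true; false; false; false; false; false; false; false; true; false];
  [:: false; true; true; true; false; false; false; false; false; true; false; false; true; false; true; false; false; false];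
  [:: true; false; false; true; true; false; true; true; false; true; false; true; false; false; true; true; false; true];
  [:: true; false; false; true; false; false; false; true; false; false; true; true; false; true; false; false; true; true];
  [:: false; true; false; false; true; false; false; true; true; true; true; false; true; true; true; false; true; false];
  [:: true; true; false; false; false; false; true; true; false; true; false; false; false; false; false; false; false; true];
  [:: false; true; false; false; true; false; false; true; false; true; false; true; true; false; false; false; true; true];
  [:: true; false; true; true; true; false; false; true; false; false; true; true; false; false; false; false; true; false];
  [:: false; false; false; true; false; true; false; true; false; true; true; true; false; false; false; true; false; true];
  [:: true; false; false; true; true; false; false; true; false; true; false; false; true; false; true; true; false; false];
  [:: false; true; true; false; false; true; true; true; false; true; true; false; true; true; false; true; true; true];
  [:: true; true; true; true; true; true; false; true; true; true; true; true; true; false; true; true; true; true]].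
Definition rowsH : seq (seq bool) :=
 [:: [:: true; false; false; true; true; true; true; false; false; true; true; true; true; false; false; false; true; false];
  [:: true; false; true; false; false; true; false; true; true; true; true; true; false; true; true; false; false; true];
  [:: true; true; false; false; false; true; false; true; false; false; true; false; true; true; true; false; true; false];
  [:: true; false; false; false; false; false; false; false; false; true; false; true; false; true; false; true; true; true];
  [:: true; false; true; false; true; false; true; false; true; true; false; true; true; true; false; false; true; false];
  [:: true; true; true; true; false; false; true; true; false; false; false; true; false; true; true; false; true; true];
  [:: true; true; true; false; false; false; true; true; true; true; false; false; false; false; false; true; true; true];
  [:: true; false; false; false; false; true; false; true; true; false; false; true; false; false; false; true; true; true];
  [:: true; true; false; true; true; true; false; false; false; false; false; false; false; false; false; false; false; true];
  [:: true; true; true; false; false; true; true; false; false; true; false; false; true; false; true; true; false; true];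
  [:: true; true; true; false; true; true; false; false; true; false; false; true; true; true; false; true; false; true];
  [:: true; false; false; true; false; true; true; true; false; true; true; false; true; true; true; true; false; true];
  [:: true; true; false; false; true; true; true; true; true; false; true; false; true; false; true; false; false; false];
  [:: true; true; false; true; false; true; false; false; false; false; true; true; false; false; true; true; true; false];
  [:: true; true; false; false; true; false; false; false; false; true; true; false; true; true; false; false; false; true];
  [:: true; true; false; true; false; false; false; false; true; true; true; false; true; true; false; false; false; false];
  [:: true; false; false; false; true; true; true; true; true; false; true; true; true; false; false; false; true; false];
  [:: true; false; true; true; true; false; true; true; true; false; false; false; false; true; false; true; true; false]].
Definition wbs : seq (seq bool) :=
 [:: [:: true; true; false; true; false; false; false; false; true; true; true; false; true; true; false; false; false; false];
  [:: false; true; true; false; false; true; true; false; false; true; false; true; false; false; false; false; false; false];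
  [:: false; false; true; true; false; true; false; false; true; false; true; false; false; true; false; false; false; false];
  [:: false; false; false; true; false; false; false; true; true; true; false; false; false; false; false; false; false; false];
  [:: false; false; false; false; true; false; true; false; true; true; false; true; false; true; true; false; false; false];
  [:: false; false; false; false; false; true; false; true; true; true; false; false; false; true; false; false; false; false];
  [:: false; false; false; false; false; false; true; true; false; false; true; false; false; false; false; false; false; false];
  [:: false; false; false; false; false; false; false; true; false; false; true; false; false; true; false; false; false; false];
  [:: false; false; false; false; false; false; false; false; true; false; false; false; false; false; false; true; false; false];
  [:: false; false; false; false; false; false; false; false; false; true; false; false; false; true; false; false; false; false];
  [:: false; false; false; false; false; false; false; false; false; false; true; false; true; false; false; false; false; false];
  [:: false; false; false; false; false; false; false; false; false; false; false; true; false; false; false; false; false; false];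
  [:: false; false; false; false; false; false; false; false; false; false; false; false; true; false; false; false; false; false];
  [:: false; false; false; false; false; false; false; false; false; false; false; false; false; true; false; false; false; false];
  [:: false; false; false; false; false; false; false; false; false; false; false; false; false; false; true; false; false; false];
  [:: false; false; false; false; false; false; false; false; false; false; false; false; false; false; false; true; false; false];
  [:: false; false; false; false; false; false; false; false; false; false; false; false; false; false; false; false; true; true];
  [:: false; false; false; false; false; false; false; false; false; false; false; false; false; false; false; false; false; true]].
Definition gb (j k : nat) := nth false (nth [::] rowsG j) k.
Definition hb (j k : nat) := nth false (nth [::] rowsH j) k.
Definition wb (i j : nat) := nth false (nth [::] wbs i) j.
Definition rowb (j : nat) : seq bool := [seq gb j k | k <- iota 0 18].
Definition xorl (a b : seq bool) : seq bool := [seq p.1 (+) p.2 | p <- zip a b].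
Fixpoint sums (rs : seq (seq bool)) : seq (seq bool) :=
  if rs is a :: rs' then let S := sums rs' in S ++ map (xorl a) S else [:: nseq 18 false].
Definition rsn (i : nat) : seq nat := filter (fun j => (i < j)%N) (iota 0 18).
Definition cands (i : nat) := map (xorl (rowb i)) (sums [seq rowb j | j <- rsn i]).
Definition lowcheck := all (fun i => all (fun v => (nth O dseq18 i <= count (fun b : bool => b) v)%N) (cands i)) (iota 0 18).
Lemma lowcheckT : lowcheck.
Proof. vm_compute. reflexivity. Qed.
Definition prodb (f g : nat -> nat -> bool) (i k : nat) :=
  foldr addb false [seq f i j && g j k | j <- iota 0 18].
Definition invcheck := all (fun i => all (fun k => prodb gb hb i k == (i == k)) (iota 0 18)) (iota 0 18).
Lemma invcheckT : invcheck. Proof. by vm_compute. Qed.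
Definition upcheck := all (fun i => (count (fun b : bool => b) [seq prodb wb gb i k | k <- iota 0 18] == nth O dseq18 i)
   && all (fun j => ~~ wb i j) (iota 0 i) && wb i i) (iota 0 18).
Lemma upcheckT : upcheck. Proof. by vm_compute. Qed.

Section Main.
Local Open Scope ring_scope.

Lemma F2cases (x:'F_2): x = 0 \/ x = 1.
Proof. case: x => -[|[|m]] //= Hm; [left|right]; exact/val_inj. Qed.
Definition tob (x : 'F_2) : bool := x != 0.
Lemma tobD x y : tob (x+y) = tob x (+) tob y.
Proof. by case: (F2cases x) => ->; case: (F2cases y) => ->. Qed.
Lemma tobM x y : tob (x*y) = tob x && tob y.
Proof. by case: (F2cases x) => ->; case: (F2cases y) => ->. Qed.
Lemma tob0 : tob 0 = false. Proof. by []. Qed.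
Lemma tob_nat (b : bool) : tob (b%:R) = b. Proof. by case: b. Qed.
Lemma tob_inj x y : tob x = tob y -> x = y.
Proof. by case: (F2cases x) => ->; case: (F2cases y) => ->. Qed.

Lemma big_foldr (F : nat -> bool) :
  \big[addb/false]_(j < 18) F j = foldr addb false [seq F j | j <- iota 0 18].
Proof.
rewrite -(big_mkord xpredT) /index_iota subn0.
by elim: (iota 0 18) => [|a s IH]; rewrite ?big_nil ?big_cons //= IH.
Qed.

Lemma entry m p (A : 'M['F_2]_(m,18)) (B : 'M['F_2]_(18,p)) i k :
  tob ((A *m B) i k) = \big[addb/false]_(j < 18) (tob (A i j) && tob (B j k)).
Proof.
rewrite mxE (big_morph tob tobD tob0); apply: eq_bigr => j _; exact: tobM.
Qed.

Definition mkM (f : nat -> nat -> bool) : 'M['F_2]_18 := \matrix_(j, k) (f j k)%:R.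
Definition mkV (f : nat -> bool) : 'rV['F_2]_18 := \row_k (f k)%:R.

Lemma entryM f g (i k : 'I_18) : tob ((mkM f *m mkM g) i k) = prodb f g i k.
Proof.
rewrite entry /prodb -big_foldr; apply: eq_bigr => j _; by rewrite !mxE !tob_nat.
Qed.

Lemma entryV f g (k : 'I_18) : tob ((mkV f *m mkM g) 0 k) = prodb (fun _ => f) g 0 k.
Proof.
rewrite entry /prodb -big_foldr; apply: eq_bigr => j _; by rewrite !mxE !tob_nat.
Qed.

Definition vtob (v : 'rV['F_2]_18) : seq bool := [seq tob (v 0 j) | j <- enum 'I_18].

Lemma vtob0 : vtob 0 = nseq 18 false.
Proof.
rewrite /vtob -[X in nseq X _](size_enum_ord 18).
by elim: (enum 'I_18) => [|a s IH] //=; rewrite IH mxE.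
Qed.

Lemma vtobD u v : vtob (u + v) = xorl (vtob u) (vtob v).
Proof.
rewrite /vtob /xorl zip_map -map_comp; apply: eq_map => j /=; by rewrite mxE tobD.
Qed.

Lemma sums_mem (f : 'I_18 -> 'rV['F_2]_18) (r : seq 'I_18) (c : 'I_18 -> 'F_2) :
  vtob (\sum_(j <- r) c j *: f j) \in sums [seq vtob (f j) | j <- r].
Proof.
elim: r => [|a r IH]; first by rewrite big_nil vtob0 mem_seq1.
rewrite big_cons /= mem_cat.
case: (F2cases (c a)) => ->; first by rewrite scale0r add0r IH.
by rewrite scale1r vtobD map_f ?orbT.
Qed.

Definition Gm := mkM gb.
Definition Hm := mkM hb.

Lemma vtob_row (j : 'I_18) : vtob (row j Gm) = rowb j.
Proof.
rewrite /vtob /rowb -val_enum_ord -map_comp; apply: eq_map => k /=.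
by rewrite !mxE tob_nat.
Qed.

Definition rsi (i : 'I_18) : seq 'I_18 := filter (fun j : 'I_18 => ltn i j) (enum 'I_18).
Lemma rsi_val i : [seq val j | j <- rsi i] = rsn i.
Proof. by rewrite /rsi /rsn -val_enum_ord filter_map. Qed.

Lemma split_sum (i : 'I_18) (x : 'rV['F_2]_18) :
  (forall j : 'I_18, ltn j i -> x 0 j = 0) -> x 0 i = 1 ->
  x *m Gm = row i Gm + \sum_(j <- rsi i) x 0 j *: row j Gm.
Proof.
move=> h0 h1.
rewrite mulmx_sum_row (bigD1 i) //= h1 scale1r; congr (_ + _).
rewrite /rsi big_filter big_enum_cond.
rewrite big_mkcond [RHS]big_mkcond; apply: eq_bigr => j _ /=.
case: (ltngtP i j) => h.
- have -> : (j != i) by rewrite neq_ltn h orbT.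
  by [].
- by rewrite h0 // scale0r; case: (j != i).
- have -> : j = i by apply/val_inj.
  by rewrite eqxx /=.
Qed.

Definition wtb (v : seq bool) : nat := count (fun b : bool => b) v.

Lemma low (i : 'I_18) (x : 'rV['F_2]_18) :
  (forall j : 'I_18, ltn j i -> x 0 j = 0) -> x 0 i = 1 ->
  leq (nth O dseq18 i) (wtb (vtob (x *m Gm))).
Proof.
move=> h0 h1; rewrite (split_sum h0 h1) vtobD vtob_row.
have := sums_mem (fun j => row j Gm) (rsi i) (fun j => x 0 j).
rewrite (eq_map (g := fun j : 'I_18 => rowb j)); last by move=> j; exact: vtob_row.
rewrite (map_comp rowb val) rsi_val => hm.
have hc : xorl (rowb i) (vtob (\sum_(j <- rsi i) x 0 j *: row j Gm)) \in cands i
  by apply: map_f.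
have := lowcheckT; rewrite /lowcheck => /allP /(_ i).
rewrite mem_iota /= ltn_ord => /(_ isT) /allP /(_ _ hc).
by [].
Qed.

Lemma cardc (P : pred 'I_18) : #|[set j | P j]| = count P (enum 'I_18).
Proof. rewrite cardsE cardE /enum_mem size_filter [in RHS](@eq_filter _ _ predT) // filter_predT.
by apply: eq_count. Qed.

Lemma dH_vtob (a b : 'rV['F_2]_18) : dH a b = wtb (vtob (b - a)).
Proof.
rewrite /dH cardc /wtb /vtob count_map; apply: eq_count => j /=.
rewrite !mxE /tob; by case: (F2cases (a 0 j)) => ->; case: (F2cases (b 0 j)) => ->.
Qed.

End Main.

Lemma bigmin_le' (I : finType) (P : pred I) (F : I -> nat) x j :
  P j -> leq (\big[minn/x]_(i | P i) F i) (F j).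
Proof.
move=> hP; rewrite /index_enum; move: (mem_index_enum j); rewrite /index_enum.
elim: (Finite.enum I) => // a s IH; rewrite inE big_cons.
case/orP => [/eqP <-|hs]; first by rewrite hP geq_minl.
case: (P a); last exact: IH.
exact: leq_trans (geq_minr _ _) (IH hs).
Qed.

Section S2.
Local Open Scope ring_scope.
Lemma unitG : Gm \in unitmx.
Proof.
have h : Gm *m Hm = 1%:M.
  apply/matrixP => i k; apply: tob_inj; rewrite entryM mxE tob_nat.
  have hi : (val i \in iota 0 18) by rewrite mem_iota ltn_ord.
  have hk : (val k \in iota 0 18) by rewrite mem_iota ltn_ord.
  have := invcheckT; rewrite /invcheck => /allP /(_ _ hi) /allP /(_ _ hk) /eqP ->.
  by [].
by case: (mulmx1_unit h).
Qed.

Lemma Dmin_eq (i : 'I_18) : Dmin (lin_kernel Gm) i = nth O dseq18 i.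
Proof.
have hi : (val i \in iota 0 18) by rewrite mem_iota ltn_ord.
have := upcheckT; rewrite /upcheck => /allP /(_ _ hi) /andP [/andP [hc hz] hw].
pose xw := mkV (wb i).
have hp : split_pair i (0, xw).
  rewrite /split_pair /=; apply/andP; split; [apply/andP; split|].
  - apply/forallP => j; apply/implyP => hj; rewrite !mxE.
    have := allP hz j; rewrite mem_iota /= hj => /(_ isT) /negbTE ->; by [].
  - by rewrite mxE.
  - by rewrite mxE hw.
have hd : dH (lin_kernel Gm 0) (lin_kernel Gm xw) = nth O dseq18 i.
  rewrite /lin_kernel mul0mx dH_vtob subr0 /wtb /vtob.
  rewrite (eq_map (fun k => entryV (wb i) gb k)).
  move/eqP: hc; rewrite -val_enum_ord -map_comp => <-.
  by [].
apply/eqP; rewrite eqn_leq; apply/andP; split.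
- rewrite -hd /Dmin; exact: (bigmin_le' (fun p => dH (lin_kernel Gm p.1) (lin_kernel Gm p.2)) 18 hp).
- rewrite /Dmin; apply: (big_ind (fun m => leq (nth O dseq18 i) m)).
  + by rewrite -hd /dH -[X in leq _ X](card_ord 18) max_card.
  + by move=> a b ha hb; rewrite leq_min ha hb.
  + move=> [a b] /= hp'; rewrite dH_vtob /lin_kernel -mulmxBl; apply: low.
    * case/andP: hp' => /andP [/forallP hf _] _ j hj; rewrite !mxE.
      by have /implyP /(_ hj) /eqP -> := hf j; rewrite subrr.
    * case/andP: hp' => /andP [_ /eqP ha] /eqP hb; by rewrite !mxE ha hb subr0.
Qed.

End S2.

Theorem mainTheorem18 :
  (exists G : 'M['F_2]_18, G \in unitmx /\
     forall i : 'I_18, Dmin (lin_kernel G) i = @nth nat O dseq18 i) /\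
  (exists g : bvec 18 -> bvec 18, is_kernel g /\
     (exponent g >= / 18 * \big[Rplus/0%R]_(i < 18)
                             logb 18 (INR (@nth nat O dseq18 i)))%R).
Proof.
split; first by exists Gm; split; [exact: unitG | exact: Dmin_eq].
exists (lin_kernel Gm); split.
- exists (fun u => mulmx u (invmx Gm)) => u; rewrite /lin_kernel.
  + exact: (mulmxK unitG).
  + exact: (mulmxKV unitG).
- rewrite /exponent.
  rewrite (eq_bigr (fun i : 'I_18 => logb (INR 18) (INR (nth O dseq18 i)))); last first.
    by move=> i _; rewrite Dmin_eq.
  have h18 : INR 18 = 18%R by rewrite INR_IZR_INZ.
  rewrite h18; apply: Rle_ge; apply: Rle_refl.
Qed.
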